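(* Let $T=2k$ with $k\ge 1$ an integer. Then every word $w=s_1\cdots s_T\in\Omega_T$ satisfies $2x_{12}(w)+x_{13}(w)+x_{32}(w)\ge k-1$. Moreover, if $s_T=2$, then $2x_{12}(w)+x_{13}(w)+x_{32}(w)> k-1$.
   Context: $\Omega_T$ is the set of words $s_1\cdots s_T$ over $\{1,2,3\}$ with $s_l\ne s_{l+1}$ for all $l$; for $i\ne j$, $x_{ij}(w)$ is the number of $l\in\{1,\dots,T-1\}$ with $s_ls_{l+1}=ij$. *)

(* Defs.v *)
From mathcomp Require Import all_boot.
Set Implicit Arguments. Unset Strict Implicit. Unset Printing Implicit Defensive.

(* Words over the alphabet {1,2,3} are represented as sequences of naturals;
   letter s_l (1-based in the paper) is  nth 0 w (l-1). *)

Definition in_Omega (T : nat) (w : seq nat) : bool :=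
  [&& size w == T,
      all (fun a => (1 <= a <= 3)) w &
      [forall l : 'I_T.-1, nth 0 w l != nth 0 w l.+1]].

Definition xcount (i j : nat) (w : seq nat) : nat :=
  #|[set l : 'I_(size w).-1 | (nth 0 w l == i) && (nth 0 w l.+1 == j)]|.

(* Main.v *)
Require Import Defs.
From mathcomp Require Import all_boot.
From mathcomp Require Import zify.

Definition pc (i j : nat) (w : seq nat) : nat :=
  \sum_(0 <= l < (size w).-1) ((nth 0 w l == i) && (nth 0 w l.+1 == j) : nat).

Lemma xcount_pc i j w : xcount i j w = pc i j w.
Proof.
rewrite /xcount /pc big_mkord -sum1_card big_mkcond /=.
apply: eq_bigr => l _; rewrite inE; by case: (_ && _).
Qed.

Lemma pc_nil i j a : pc i j [:: a] = 0.
Proof. by rewrite /pc big_geq. Qed.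

Lemma pc_cons i j a b s :
  pc i j [:: a, b & s] = ((a == i) && (b == j) : nat) + pc i j (b :: s).
Proof. by rewrite /pc /= big_nat_recl. Qed.

Definition psi (x : nat) : nat := if x == 1 then 2 else if x == 3 then 1 else 0.

Lemma key s : forall a, all (fun x => (1 <= x <= 3)) (a :: s) ->
  (forall l, l < size s -> nth 0 (a :: s) l != nth 0 (a :: s) l.+1) ->
  size s + psi a <= 2 * (2 * pc 1 2 (a :: s) + pc 1 3 (a :: s) + pc 3 2 (a :: s))
                    + psi (last a s).
Proof.
elim: s => [|b s IH] a Hall Hd.
  by rewrite !pc_nil /=; lia.
rewrite !pc_cons /=.
move: Hall => /= /andP [Ha Hall].
have Hab : a != b by apply: (Hd 0).
have IH' := IH b Hall (fun l Hl => Hd l.+1 Hl).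
move: Hall => /andP [Hb _].
clear Hd IH; move: Ha Hb Hab IH'; rewrite /psi.
case: a => [|[|[|[|a]]]] //; case: b => [|[|[|[|b]]]] //= *; lia.
Qed.

Theorem lemma3 (k : nat) (w : seq nat) :
  1 <= k -> in_Omega (2 * k) w ->
  k.-1 <= 2 * xcount 1 2 w + xcount 1 3 w + xcount 3 2 w /\
  (last 0 w = 2 -> k.-1 < 2 * xcount 1 2 w + xcount 1 3 w + xcount 3 2 w).
Proof.
move=> Hk /and3P [/eqP Hs Hall /forallP Hd].
rewrite !xcount_pc.
case: w Hs Hall Hd => [|a s] Hs Hall Hd; first by move: Hs => /=; lia.
have Hd' : forall l, l < size s -> nth 0 (a :: s) l != nth 0 (a :: s) l.+1.
  move=> l Hl; have Hl' : l < (2 * k).-1 by rewrite -Hs.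
  exact: (Hd (Ordinal Hl')).
have H := @key s a Hall Hd'.
have Ha : psi a <= 2 by rewrite /psi; case: ifP => //; case: ifP.
move: Hs => /= Hs.
split.
  move: H; rewrite /psi; case: (last a s == 1); case: (last a s == 3); lia.
move=> Hl; move: H; rewrite Hl /psi /=; lia.
Qed.
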